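(* Let $K$ be a number field, $a_1,a_2,e\ge 0$ integers, and let $X$ be the smooth surface of bidegree $(e,2)$ in $\mathbb{F}(0,a_1,a_2)$ cut out by $Q_{(s,t)}(\mathbf{x}) = \sum_{0\le i,j\le 2} f_{i,j}(s,t)x_ix_j$ with $f_{i,j}=f_{j,i}\in\mathcal{O}_K[s,t]$ binary forms of degree $a_i+a_j+e$ ($a_0=0$), with conic bundle $\pi:(s:t;\mathbf{x})\mapsto(s:t)$ and $\Delta(s,t) = -4\det(f_{i,j}(s,t))$, and assume $t \nmid \Delta(s,t)$. Let $p$ be a closed point of $\mathbb{P}^1_K$ with singular fibre $X_p$, with associated $\theta_p$ and $\delta_p$ as in the context. Then $\delta_p(\theta_p,1) \neq 0$, and the fibre $X_p$ is split over $K(p)$ if and only if $\delta_p(\theta_p,1)$ is a square in $K(p)$.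
   Context: Closed points $p$ with singular fibre correspond to irreducible factors $\Delta_p(s,t) \in \mathcal{O}_K[s,t]$ of $\Delta(s,t)$ (up to constants), with $\Delta_p(1,0)\neq 0$; the residue field $K(p)$ is generated over $K$ by a root $\theta_p \in \overline{K}$ of $\Delta_p(s,1)$. The plane conic $C_{(\theta_p,1)}: Q_{(\theta_p,1)}(\mathbf{x}) = 0$ over $K(p)$ is isomorphic to $X_p$ and is singular, with a unique singular point; let $i_p \in \{0,1,2\}$ be the index of the first nonzero coordinate of that point. Then $\delta_p(s,t) \in \mathcal{O}_K[s,t]$ is the discriminant of the binary quadratic form in the two remaining variables obtained by setting $x_{i_p} = 0$ in $Q_{(s,t)}(x_0,x_1,x_2)$, where the discriminant of $\alpha y^2 + \beta yz + \gamma z^2$ is $\beta^2 - 4\alpha\gamma$. A conic over a field is split if it is smooth or is a union of two lines defined over that field. $\mathbb{F}(0,a_1,a_2)$ is the $\mathbb{P}^2$-bundle $\mathbb{P}(\mathcal{O}\oplus\mathcal{O}(a_1)\oplus\mathcal{O}(a_2))$ over $\mathbb{P}^1$, with bidegree conventions so that $f_{i,j}$ has degree $a_i+a_j+e$. *)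

(* Defs.v *)
From HB Require Import structures.
From mathcomp Require Import all_boot all_order all_algebra all_field.
From mathcomp Require Import mpoly.
Set Implicit Arguments. Unset Strict Implicit. Unset Printing Implicit Defensive.
Import GRing.Theory.
Local Open Scope ring_scope.

Definition adeg (a1 a2 : nat) (i : 'I_3) : nat :=
  match val i with 0 => 0 | 1 => a1 | _ => a2 end%N.

(* x is an algebraic integer (element of O_K) *)
Definition is_integral (K : fieldType) (x : K) : Prop :=
  exists q : {poly int}, q \is monic /\ root (map_poly (fun z : int => z%:~R) q) x.

Definition Delta (K : fieldType) (f : 'I_3 -> 'I_3 -> {mpoly K[2]}) : {mpoly K[2]} :=
  - 4%:R * \det (\matrix_(i, j) f i j).

Definition pt2 (R : nzRingType) (s t : R) : 'I_2 -> R :=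
  fun i => if val i == 0%N then s else t.

Definition dehom (K : fieldType) (F : {mpoly K[2]}) : {poly K} :=
  (map_mpoly (fun c : K => c%:P) F).@[pt2 'X 1].

Definition evalE (K : fieldType) (E : fieldExtType K) (F : {mpoly K[2]}) (s t : E) : E :=
  (map_mpoly (in_alg E) F).@[pt2 s t].

(* the total polynomial Q_(s,t)(x) in the Cox coordinates (s,t,x0,x1,x2) *)
Definition QX (K : fieldType) (f : 'I_3 -> 'I_3 -> {mpoly K[2]}) : {mpoly K[5]} :=
  \sum_(i < 3) \sum_(j < 3)
     (f i j \mPo [tuple 'X_(inord 0) ; 'X_(inord 1)]) * 'X_(inord (2 + i)) * 'X_(inord (2 + j)).

(* smoothness of X in F(0,a1,a2) (Jacobian criterion on the Cox cover, over
   every finite extension E of K, i.e. over the algebraic closure) *)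
Definition smooth_surface (K : fieldType) (f : 'I_3 -> 'I_3 -> {mpoly K[2]}) : Prop :=
  forall (E : fieldExtType K) (w : 'I_5 -> E),
    (w (inord 0) != 0 \/ w (inord 1) != 0) ->
    (w (inord 2) != 0 \/ w (inord 3) != 0 \/ w (inord 4) != 0) ->
    (map_mpoly (in_alg E) (QX f)).@[w] = 0 ->
    exists i : 'I_5, (map_mpoly (in_alg E) (mderiv i (QX f))).@[w] != 0.

Definition Qform (E : fieldType) (c : 'I_3 -> 'I_3 -> E) : {mpoly E[3]} :=
  \sum_(i < 3) \sum_(j < 3) c i j *: ('X_i * 'X_j).

Definition linform (E : fieldType) (l : 'I_3 -> E) : {mpoly E[3]} :=
  \sum_(i < 3) l i *: 'X_i.

Definition conic_sing_pt (E : fieldType) (c : 'I_3 -> 'I_3 -> E) (v : 'I_3 -> E) : Prop :=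
  (exists i : 'I_3, v i != 0) /\ (Qform c).@[v] = 0 /\ forall i : 'I_3, (mderiv i (Qform c)).@[v] = 0.

Definition smooth_conic (E : fieldType) (c : 'I_3 -> 'I_3 -> E) : Prop :=
  forall v : 'I_3 -> E, ~ conic_sing_pt c v.

Definition split_over (K : fieldType) (E : fieldExtType K) (F : {subfield E})
    (c : 'I_3 -> 'I_3 -> E) : Prop :=
  smooth_conic c \/
  exists l1 l2 : 'I_3 -> E,
    (forall i, l1 i \in F) /\ (forall i, l2 i \in F) /\
    Qform c = linform l1 * linform l2.

Definition first_nz (E : fieldType) (v : 'I_3 -> E) : 'I_3 :=
  if v ord0 != 0 then ord0 else if v (inord 1) != 0 then inord 1 else inord 2.

(* the two remaining indices j < k once x_i is set to 0 *)
Definition rest1 (i : 'I_3) : 'I_3 := if val i == 0%N then inord 1 else ord0.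
Definition rest2 (i : 'I_3) : 'I_3 := if val i == 2%N then inord 1 else inord 2.

(* delta_p(s,t): discriminant beta^2 - 4 alpha gamma of
   alpha y^2 + beta y z + gamma z^2 := Q_(s,t)(x) with x_i = 0, y = x_j, z = x_k *)
Definition delta (K : fieldType) (f : 'I_3 -> 'I_3 -> {mpoly K[2]}) (i : 'I_3) : {mpoly K[2]} :=
  let j := rest1 i in let k := rest2 i in
  (f j k + f k j) ^+ 2 - 4%:R * f j j * f k k.

(* Main.v *)
Require Import Defs.
From HB Require Import structures.
From mathcomp Require Import all_boot all_order all_algebra all_field.
From mathcomp Require Import mpoly.
From mathcomp Require Import ring zify.
From Stdlib Require Import Classical.
Import GRing.Theory.
Local Open Scope ring_scope.
Set Implicit Arguments. Unset Strict Implicit. Unset Printing Implicit Defensive.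

Lemma sum3_std (R : nmodType) (F : 'I_3 -> R) :
  \sum_a F a = F (inord 0) + F (inord 1) + F (inord 2).
Proof.
rewrite !big_ord_recr big_ord0 /= add0r.
by congr (_ + _ + _); congr F; apply: val_inj; rewrite /= inordK.
Qed.

Lemma ord3_cases (i : 'I_3) : [\/ i = inord 0, i = inord 1 | i = inord 2].
Proof.
case: i => [[|[|[|//]]] Hi]; [constructor 1|constructor 2|constructor 3];
  by apply: val_inj; rewrite /= inordK.
Qed.

Lemma val_inord3 k : (k < 3)%N -> val (inord k : 'I_3) = k.
Proof. by move=> h; apply: inordK. Qed.

Lemma rest_cases (i : 'I_3) :
  [\/ [/\ i = inord 0, rest1 i = inord 1 & rest2 i = inord 2],
      [/\ i = inord 1, rest1 i = inord 0 & rest2 i = inord 2] |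
      [/\ i = inord 2, rest1 i = inord 0 & rest2 i = inord 1]].
Proof.
rewrite /rest1 /rest2.
case: (ord3_cases i) => ->; rewrite !val_inord3 //=.
- by constructor 1; split => //; apply: val_inj; rewrite /= !val_inord3.
- by constructor 2; split => //; apply: val_inj; rewrite /= !val_inord3.
- by constructor 3; split => //; apply: val_inj; rewrite /= !val_inord3.
Qed.

Lemma sum3 (R : nmodType) (i : 'I_3) (F : 'I_3 -> R) :
  \sum_a F a = F i + F (rest1 i) + F (rest2 i).
Proof.
rewrite sum3_std; case: (rest_cases i) => -[-> -> ->] //.
  by rewrite [F _ + F _]addrC.
by rewrite addrAC [F _ + F _]addrC.
Qed.

Lemma rest_neq (i : 'I_3) :
  [/\ rest1 i != i, rest2 i != i & rest1 i != rest2 i].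
Proof.
case: (rest_cases i) => -[-> -> ->]; split; apply/eqP => /(congr1 val);
  by rewrite !val_inord3.
Qed.

Lemma ord3_other (i a : 'I_3) : [\/ a = i, a = rest1 i | a = rest2 i].
Proof.
case: (rest_cases i) => -[-> -> ->]; case: (ord3_cases a) => ->;
  by [constructor 1 | constructor 2 | constructor 3].
Qed.


Lemma map_meval (n : nat) (R S : comNzRingType) (phi : {rmorphism R -> S})
  (p : {mpoly R[n]}) (v : 'I_n -> R) :
  phi (p.@[v]) = (map_mpoly phi p).@[fun i => phi (v i)].
Proof.
elim/mpolyind: p => [|c m p _ _ IH]; first by rewrite !raddf0.
rewrite !raddfD /= IH; congr (_ + _).
rewrite mevalZ map_mpolyZ mevalZ map_mpolyX !mevalX rmorphM rmorph_prod /=.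
by congr (_ * _); apply: eq_bigr => i _; rewrite rmorphXn.
Qed.

Lemma map_mderiv (n : nat) (R S : comNzRingType) (phi : {rmorphism R -> S})
  (p : {mpoly R[n]}) i :
  map_mpoly phi (mderiv i p) = mderiv i (map_mpoly phi p).
Proof.
apply/mpolyP => m.
rewrite mcoeff_map_mpoly !mcoeff_deriv mcoeff_map_mpoly.
by rewrite raddfMn.
Qed.

Definition envT (L : fieldType) n (w u : 'I_n -> L) : 'I_n -> {poly L} :=
  fun j => (w j)%:P + (u j)%:P * 'X.

Definition evT (L : fieldType) n (w u : 'I_n -> L) (P : {mpoly L[n]}) : {poly L} :=
  (map_mpoly polyC P).@[envT w u].

Definition Tay (L : fieldType) n (w u : 'I_n -> L) (P : {mpoly L[n]}) : Prop :=
  (evT w u P).[0] = P.@[w] /\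
  (evT w u P)^`().[0] = \sum_i u i * (mderiv i P).@[w].

Lemma evTD (L : fieldType) n (w u : 'I_n -> L) P Q :
  evT w u (P + Q) = evT w u P + evT w u Q.
Proof. by rewrite /evT !raddfD. Qed.

Lemma evTM (L : fieldType) n (w u : 'I_n -> L) P Q :
  evT w u (P * Q) = evT w u P * evT w u Q.
Proof. by rewrite /evT !rmorphM. Qed.

Lemma TayD (L : fieldType) n (w u : 'I_n -> L) P Q :
  Tay w u P -> Tay w u Q -> Tay w u (P + Q).
Proof.
rewrite /Tay evTD; move: (evT w u P) (evT w u Q) => p q [h1 h2] [h3 h4].
rewrite derivD !hornerD h1 h2 h3 h4 -big_split /= mevalD; split; first by [].
by apply: eq_bigr => i _; rewrite mderivD mevalD mulrDr.
Qed.

Lemma TayM (L : fieldType) n (w u : 'I_n -> L) P Q :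
  Tay w u P -> Tay w u Q -> Tay w u (P * Q).
Proof.
rewrite /Tay evTM; move: (evT w u P) (evT w u Q) => p q [h1 h2] [h3 h4].
rewrite derivM !(hornerD, hornerM) h1 h2 h3 h4 mevalM; split; first by [].
rewrite mulr_suml mulr_sumr -big_split /=.
apply: eq_bigr => i _; rewrite mderivM mevalD !mevalM.
move: (P.@[w]) (Q.@[w]) (P^`M(i)).@[w] (Q^`M(i)).@[w] (u i) => a b c d e.
ring.
Qed.

Lemma TayC (L : fieldType) n (w u : 'I_n -> L) c :
  Tay w u c%:MP.
Proof.
rewrite /Tay /evT map_mpolyC mevalC mevalC hornerC derivC horner0; split => //.
by rewrite big1 // => i _; rewrite mderivC meval0 mulr0.
Qed.

Lemma TayX (L : fieldType) n (w u : 'I_n -> L) (k : 'I_n) :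
  Tay w u 'X_k.
Proof.
rewrite /Tay /evT map_mpolyX mevalXU /envT derivD derivC add0r derivM derivC derivX mul0r add0r mulr1.
rewrite !(hornerD, hornerM, hornerC, hornerX) mulr0 addr0 mevalXU; split => //.
rewrite (bigD1 k) //= big1 ?addr0 => [|i ik].
  rewrite mderivX mnm1E eqxx.
  have -> : (U_(k) - U_(k))%MM = 0%MM by apply/mnmP => j; rewrite mnmBE subnn mnm0E.
  by rewrite mpolyX0 scale1r meval1 mulr1.
by rewrite mderivX mnm1E eq_sym (negbTE ik) scale0r meval0 mulr0.
Qed.

Lemma TayZ (L : fieldType) n (w u : 'I_n -> L) c P :
  Tay w u P -> Tay w u (c *: P).
Proof.
by move=> h; rewrite -mul_mpolyC; apply: TayM => //; apply: TayC.
Qed.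

Lemma Tay_all (L : fieldType) n (w u : 'I_n -> L) P : Tay w u P.
Proof.
elim/mpolyind: P => [|c m p _ _ IH].
  by rewrite -(mpolyC0 n L); apply: TayC.
apply: TayD => //; apply: TayZ.
rewrite mpolyXE_id; apply: big_ind => //.
- by rewrite -(mpolyC1 n L); apply: TayC.
- exact: TayM.
move=> i _; elim: (m i) => [|k IHk]; first by rewrite expr0 -(mpolyC1 n L); apply: TayC.
by rewrite exprS; apply: TayM => //; apply: TayX.
Qed.


Lemma hom_scale (L : fieldType) n (F : {mpoly L[n]}) d w :
  F \is d.-homog -> evT w w F = ('X + 1)^+d * (F.@[w])%:P.
Proof.
move=> /dhomogP hF.
rewrite /evT {1}(mpolyE F).
rewrite (big_morph (map_mpoly polyC) (raddfD _) (raddf0 _)).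
rewrite (big_morph (meval (envT w w)) (raddfD _) (raddf0 _)).
rewrite [F.@[w]]mevalE rmorph_sum mulr_sumr.
apply: eq_big_seq => m hm.
rewrite map_mpolyZ map_mpolyX mevalZ mevalX /envT rmorphM rmorph_prod /=.
have -> : \prod_(i < n) ((w i)%:P + (w i)%:P * 'X) ^+ m i =
          \prod_(i < n) (('X + 1) ^+ m i * ((w i)%:P ^+ m i)).
  by apply: eq_bigr => i _; rewrite -exprMn; congr (_ ^+ _); ring.
rewrite big_split /= prodrXr -mdegE hF //.
rewrite mulrCA; congr (_ * _); congr (_ * _).
by apply: eq_bigr => i _; rewrite rmorphXn.
Qed.

Lemma euler (L : fieldType) n (F : {mpoly L[n]}) d w :
  F \is d.-homog -> \sum_i w i * (mderiv i F).@[w] = d%:R * F.@[w].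
Proof.
move=> hF; have [_ <-] := Tay_all w w F.
rewrite (hom_scale _ hF) derivM derivC mulr0 addr0 deriv_exp derivD derivX derivC addr0.
rewrite -mulr_natl !(hornerM, hornerC, hornerXn, hornerD, hornerX, hornerMn).
move: (F.@[w]) => c.
by rewrite horner_exp hornerD hornerX hornerC add0r expr1n !mul1r mulr1.
Qed.



Lemma map_comp_eval (R S : comNzRingType) (phi : {rmorphism R -> S}) k n
  (p : {mpoly R[k]}) (lq : k.-tuple {mpoly R[n]}) (v : 'I_n -> S) :
  injective phi ->
  (map_mpoly phi (p \mPo lq)).@[v] =
  (map_mpoly phi p).@[fun i => (map_mpoly phi (tnth lq i)).@[v]].
Proof.
move=> inj; rewrite map_mpoly_comp // comp_mpoly_meval.
by apply: meval_eq => i; rewrite tnth_map.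
Qed.

Definition w5 (L : fieldType) (th : L) (x : 'I_3 -> L) : 'I_5 -> L :=
  fun k => match val k with 0 => th | 1 => 1 | j.+2 => x (inord j) end.

Lemma tnth_t (K : fieldType) (i : 'I_2) :
  tnth [tuple ('X_(inord 0) : {mpoly K[5]}) ; 'X_(inord 1)] i = 'X_(inord i).
Proof. by case: i => [[|[|//]] Hi]. Qed.

Lemma QX_eval (K : fieldType) (L : fieldExtType K) (f : 'I_3 -> 'I_3 -> {mpoly K[2]})
  (P := map_mpoly (in_alg L) (QX f)) (env : 'I_5 -> {poly L}) :
  (map_mpoly polyC P).@[env] =
  \sum_a \sum_b (map_mpoly polyC (map_mpoly (in_alg L) (f a b))).@[fun i : 'I_2 => env (inord i)]
        * env (inord (2 + a)) * env (inord (2 + b)).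
Proof.
rewrite /P /QX.
rewrite (rmorph_sum (map_mpoly (in_alg L))) (rmorph_sum (map_mpoly polyC)).
rewrite (rmorph_sum (meval env)); apply: eq_bigr => a _.
rewrite (rmorph_sum (map_mpoly (in_alg L))) (rmorph_sum (map_mpoly polyC)).
rewrite (rmorph_sum (meval env)); apply: eq_bigr => b _.
rewrite !rmorphM /= !map_mpolyX !mevalXU.
congr (_ * _ * _).
rewrite map_mpoly_comp; last exact: fmorph_inj.
rewrite map_comp_eval; last exact: polyC_inj.
apply: meval_eq => i; rewrite tnth_map /= tnth_t.
by rewrite !map_mpolyX mevalXU.
Qed.

Lemma envT_facts (L : fieldType) n (w u : 'I_n -> L) k :
  (envT w u k).[0] = w k /\ (envT w u k)^`().[0] = u k.
Proof.
rewrite /envT derivD derivC add0r derivM derivC derivX mul0r add0r mulr1.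
by rewrite !(hornerD, hornerM, hornerC, hornerX) mulr0 addr0.
Qed.

Lemma prod3_facts (L : fieldType) (G X1 X2 : {poly L}) :
  (G * X1 * X2).[0] = G.[0] * X1.[0] * X2.[0] /\
  (G * X1 * X2)^`().[0] = G^`().[0] * X1.[0] * X2.[0] +
     G.[0] * (X1^`().[0] * X2.[0] + X1.[0] * X2^`().[0]).
Proof.
rewrite !derivM !(hornerD, hornerM); split => //.
move: (G.[0]) (X1.[0]) (X2.[0]) (G^`().[0]) (X1^`().[0]) (X2^`().[0]) => a b c d e g.
ring.
Qed.

Lemma QX_dir (K : fieldType) (L : fieldExtType K) (f : 'I_3 -> 'I_3 -> {mpoly K[2]})
  (th : L) (x : 'I_3 -> L) (u : 'I_5 -> L) :
  let P := map_mpoly (in_alg L) (QX f) in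
  let F a b := map_mpoly (in_alg L) (f a b) in
  let c a b := (F a b).@[pt2 th 1] in
  let u2 : 'I_2 -> L := fun i => u (inord i) in
  let D a b := \sum_i u2 i * (mderiv i (F a b)).@[pt2 th 1] in
  P.@[w5 th x] = \sum_a \sum_b c a b * x a * x b /\
  \sum_k u k * (mderiv k P).@[w5 th x] =
  \sum_a \sum_b (D a b * x a * x b +
                 c a b * (u (inord (2+a)) * x b + x a * u (inord (2+b)))).
Proof.
move=> P F c u2 D.
have [h0 h1] := Tay_all (w5 th x) u P.
rewrite -h0 -h1 /evT QX_eval.
have eG a b : (map_mpoly polyC (F a b)).@[fun i : 'I_2 => envT (w5 th x) u (inord i)]
    = evT (pt2 th 1) u2 (F a b).
  rewrite /evT; apply: meval_eq => i; rewrite /envT /u2 /w5 /pt2.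
  by case: i => [[|[|//]] Hi]; rewrite /= inordK.
pose ux := fun a : 'I_3 => u (inord (2 + a)).
have eX (a : 'I_3) : envT (w5 th x) u (inord (2 + a)) = envT x ux a.
  rewrite /envT /w5.
  have -> : val (inord (2 + a) : 'I_5) = (2 + a)%N by apply: inordK; case: a => a /= ha; lia.
  by rewrite /= inord_val.
split.
  rewrite horner_sum; apply: eq_bigr => a _; rewrite horner_sum; apply: eq_bigr => b _.
  rewrite eG !eX; have [-> _] := prod3_facts (evT (pt2 th 1) u2 (F a b))
     (envT x ux a) (envT x ux b).
  have [-> _] := Tay_all (pt2 th 1) u2 (F a b).
  by have [-> _] := envT_facts x ux a;
     have [-> _] := envT_facts x ux b.
rewrite (big_morph _ (@derivD _) (deriv0 _)) horner_sum; apply: eq_bigr => a _.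
rewrite (big_morph _ (@derivD _) (deriv0 _)) horner_sum; apply: eq_bigr => b _.
rewrite eG !eX; have [_ ->] := prod3_facts (evT (pt2 th 1) u2 (F a b))
   (envT x ux a) (envT x ux b).
have [-> ->] := Tay_all (pt2 th 1) u2 (F a b).
have [-> ->] := envT_facts x ux a.
by have [-> ->] := envT_facts x ux b.
Qed.


Lemma ker_sum1 (L : comNzRingType) (c : 'I_3 -> 'I_3 -> L) (x g : 'I_3 -> L) :
  (forall a, \sum_b c a b * x b = 0) ->
  \sum_a \sum_b c a b * (g a * x b) = 0.
Proof.
move=> hk; rewrite big1 // => a _.
rewrite (eq_bigr (fun b => g a * (c a b * x b))); last by move=> b _; rewrite mulrCA.
by rewrite -mulr_sumr hk mulr0.
Qed.

Lemma ker_sum2 (L : comNzRingType) (c : 'I_3 -> 'I_3 -> L) (x g : 'I_3 -> L) :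
  (forall a b, c a b = c b a) ->
  (forall a, \sum_b c a b * x b = 0) ->
  \sum_a \sum_b c a b * (x a * g b) = 0.
Proof.
move=> hs hk; rewrite exchange_big /=.
transitivity (\sum_a \sum_b c a b * (g a * x b)); last exact: ker_sum1.
apply: eq_bigr => a _; apply: eq_bigr => b _.
by rewrite hs [x _ * _]mulrC.
Qed.

Lemma sum2 (R : nmodType) (F : 'I_2 -> R) :
  \sum_a F a = F (inord 0) + F (inord 1).
Proof.
rewrite !big_ord_recr big_ord0 /= add0r.
by congr (_ + _); congr F; apply: val_inj; rewrite /= inordK.
Qed.

Lemma map_homog (K : fieldType) (L : fieldExtType K) n d (F : {mpoly K[n]}) :
  F \is d.-homog -> map_mpoly (in_alg L) F \is d.-homog.
Proof.
move=> /dhomogP h; apply/dhomogP => m; rewrite mcoeff_msupp mcoeff_map_mpoly => hm.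
apply: h; rewrite mcoeff_msupp; apply: contraNN hm => /eqP ->.
by rewrite raddf0.
Qed.

Lemma SS_add (R : nmodType) (G1 G2 : 'I_3 -> 'I_3 -> R) :
  \sum_a \sum_b (G1 a b + G2 a b) = \sum_a \sum_b G1 a b + \sum_a \sum_b G2 a b.
Proof. by rewrite -big_split; apply: eq_bigr => a _; rewrite -big_split. Qed.

Lemma SS_mul (R : comNzRingType) (k : R) (G : 'I_3 -> 'I_3 -> R) :
  \sum_a \sum_b (k * G a b) = k * \sum_a \sum_b G a b.
Proof. by rewrite mulr_sumr; apply: eq_bigr => a _; rewrite mulr_sumr. Qed.

Lemma val_inord2 k : (k < 2)%N -> val (inord k : 'I_2) = k.
Proof. by move=> h; apply: inordK. Qed.

Lemma val_inord5 k : (k < 5)%N -> val (inord k : 'I_5) = k.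
Proof. by move=> h; apply: inordK. Qed.

Lemma sing_contra (K : fieldType) (L : fieldExtType K) (a1 a2 e : nat)
  (f : 'I_3 -> 'I_3 -> {mpoly K[2]})
  (f_sym : forall i j, f i j = f j i)
  (f_hom : forall i j, f i j \is (adeg a1 a2 i + adeg a1 a2 j + e)%N.-homog)
  (X_smooth : smooth_surface f) (th : L) (x : 'I_3 -> L) :
  (exists a, x a != 0) ->
  (forall a, \sum_b (map_mpoly (in_alg L) (f a b)).@[pt2 th 1] * x b = 0) ->
  \sum_a \sum_b (mderiv (inord 0) (map_mpoly (in_alg L) (f a b))).@[pt2 th 1]
      * x a * x b = 0 -> False.
Proof.
move=> [a0 ha0] hk hs.
set F := fun a b => map_mpoly (in_alg L) (f a b).
set c := fun a b => (F a b).@[pt2 th 1].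
have csym a b : c a b = c b a by rewrite /c /F f_sym.
have hQ : (map_mpoly (in_alg L) (QX f)).@[w5 th x] = 0.
  have [-> _] := QX_dir f th x (fun _ => 0).
  transitivity (\sum_a \sum_b c a b * (x a * x b)); last exact: ker_sum1.
  by apply: eq_bigr => a _; apply: eq_bigr => b _; rewrite mulrA.
have [] := X_smooth L (w5 th x).
- by right; rewrite /w5 val_inord5 // oner_neq0.
- case: (ord3_cases a0) ha0 => -> h; [left|right;left|right;right];
    by rewrite /w5 val_inord5.
- exact: hQ.
move=> k; apply/negP; rewrite negbK; apply/eqP.
rewrite map_mderiv.
have [_ h] := QX_dir f th x (fun j => (j == k)%:R).
rewrite (bigD1 k) //= big1 ?addr0 in h; last first.
  by move=> j /negbTE ->; rewrite mul0r.
rewrite eqxx mul1r in h; rewrite {}h.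
set cs := fun a b => (mderiv (inord 0) (F a b)).@[pt2 th 1].
set ct := fun a b => (mderiv (inord 1) (F a b)).@[pt2 th 1].
have eul a b : ct a b = (adeg a1 a2 a + adeg a1 a2 b + e)%N%:R * c a b - th * cs a b.
  have := euler (pt2 th 1) (map_homog L (f_hom a b)).
  rewrite sum2 /pt2 !val_inord2 //= mul1r => <-.
  by rewrite /ct /cs /F addrAC subrr add0r.
pose p0 : L := (inord 0 == k)%:R; pose q0 : L := (inord 1 == k)%:R.
transitivity (\sum_a \sum_b ((p0 - q0 * th) * (cs a b * x a * x b)
   + (q0 * (c a b * ((adeg a1 a2 a)%:R * x a * x b))
   + (q0 * (c a b * (x a * ((adeg a1 a2 b)%:R * x b)))
   + (q0 * e%:R * (c a b * (x a * x b))
   + (c a b * ((inord (2 + a) == k)%:R * x b)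
   + c a b * (x a * (inord (2 + b) == k)%:R))))))).
  apply: eq_bigr => a _; apply: eq_bigr => b _.
  rewrite sum2 !val_inord2 // -/p0 -/q0.
  rewrite -/(F a b) -/(c a b) -/(cs a b) -/(ct a b) eul !natrD.
  move: (cs a b) (c a b) (x a) (x b) p0 q0 (adeg a1 a2 a)%:R (adeg a1 a2 b)%:R.
  move=> C0 C1 X0 X1 P0 Q0 A0 B0.
  move: (e%:R : L) ((inord (2 + a) == k)%:R : L) ((inord (2 + b) == k)%:R : L).
  move=> E0 U0 U1.
  ring.
rewrite !SS_add !SS_mul.
rewrite (ker_sum1 (fun a => (adeg a1 a2 a)%:R * x a) hk).
rewrite (ker_sum2 (fun a => (adeg a1 a2 a)%:R * x a) csym hk).
rewrite (ker_sum1 x hk).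
rewrite (ker_sum1 (fun a : 'I_3 => ((inord (2 + a) : 'I_5) == k)%:R) hk).
rewrite (ker_sum2 (fun a : 'I_3 => ((inord (2 + a) : 'I_5) == k)%:R) csym hk).
rewrite hs.
by rewrite !mulr0 !addr0.
Qed.


Lemma adjoin_ext (K : fieldType) (E : fieldExtType K) (p : {poly E}) :
  irreducible_poly p ->
  exists (L : fieldExtType K) (iota : {rmorphism E -> L}),
    (forall k, iota (in_alg E k) = in_alg L k) /\
    exists z : L, root (map_poly iota p) z.
Proof.
move=> ip; have [L0 _ [z hz _]] := irredp_FAdjoin ip.
exists (baseFieldType L0).
exists (in_alg L0 : {rmorphism E -> baseFieldType L0}).
split; first by move=> k.
by exists z.
Qed.

Lemma quad_root (K : fieldType) (E : fieldExtType K) (A B C : E) :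
  exists (L : fieldExtType K) (iota : {rmorphism E -> L}),
    (forall k, iota (in_alg E k) = in_alg L k) /\
    exists al be : L, (al != 0 \/ be != 0) /\
      iota A * al ^+ 2 + iota B * (al * be) + iota C * be ^+ 2 = 0.
Proof.
have [L [iota [hc _]]] := adjoin_ext (irredp_XsubC (0 : E)).
have [A0|nzA] := eqVneq A 0.
  exists L, iota; split => //; exists 1, 0; split; first by left; exact: oner_neq0.
  by rewrite A0 rmorph0 !mul0r mulr0 !(expr0n, mulr0, add0r).
pose q : {poly E} := A%:P * 'X^2 + (B%:P * 'X + C%:P).
have hq r : q.[r] = A * r ^+ 2 + B * r + C.
  by rewrite /q !(hornerD, hornerM, hornerC, hornerX, hornerXn) addrA.
case: (classic (exists r, root q r)) => [[r hr]|nr].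
  exists L, iota; split => //; exists (iota r), 1; split; first by right; exact: oner_neq0.
  move: hr; rewrite /root hq => /eqP h.
  by rewrite expr1n !mulr1 -!rmorphXn -!rmorphM -!rmorphD h rmorph0.
have sq : size q = 3%N.
  rewrite /q size_addl; last first.
    rewrite (size_Cmul _ nzA) size_polyXn size_MXaddC.
    by case: ifP => // _; rewrite size_polyC; case: (B != 0).
  by rewrite (size_Cmul _ nzA) size_polyXn.
have iq : irreducible_poly q.
  apply: cubic_irreducible; first by rewrite sq.
  by move=> r; apply/negP => hr; apply: nr; exists r.
have [L' [iota' [hc' [z hz]]]] := adjoin_ext iq.
exists L', iota'; split => //; exists z, 1; split; first by right; exact: oner_neq0.
move: hz; rewrite /root /q !(rmorphD, rmorphM) /= !map_polyC map_polyX.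
rewrite !(hornerD, hornerM, hornerC, hornerX) => /eqP <-.
by rewrite expr1n !mulr1 expr2 addrA.
Qed.


Lemma map_in_alg_comp (K : fieldType) (E L : fieldExtType K) (iota : {rmorphism E -> L})
  (hc : forall k, iota (in_alg E k) = in_alg L k) n (p : {mpoly K[n]}) :
  map_mpoly (in_alg L) p = map_mpoly iota (map_mpoly (in_alg E) p).
Proof. by apply/mpolyP => m; rewrite !mcoeff_map_mpoly; exact: (esym (hc _)). Qed.

Lemma transfer_eval (K : fieldType) (E L : fieldExtType K) (iota : {rmorphism E -> L})
  (hc : forall k, iota (in_alg E k) = in_alg L k) (p : {mpoly K[2]}) (th : E) :
  (map_mpoly (in_alg L) p).@[pt2 (iota th) 1] = iota ((map_mpoly (in_alg E) p).@[pt2 th 1]).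
Proof.
rewrite map_meval (map_in_alg_comp hc); apply: meval_eq => i.
by rewrite /pt2; case: ifP => _ //; rewrite rmorph1.
Qed.

Lemma transfer_deriv (K : fieldType) (E L : fieldExtType K) (iota : {rmorphism E -> L})
  (hc : forall k, iota (in_alg E k) = in_alg L k) (p : {mpoly K[2]}) (th : E) i :
  (mderiv i (map_mpoly (in_alg L) p)).@[pt2 (iota th) 1] =
  iota ((mderiv i (map_mpoly (in_alg E) p)).@[pt2 th 1]).
Proof.
rewrite map_meval (map_in_alg_comp hc) -map_mderiv; apply: meval_eq => j.
by rewrite /pt2; case: ifP => _ //; rewrite rmorph1.
Qed.

Lemma sum_ind (R : nzRingType) (i : 'I_3) (G : 'I_3 -> R) :
  \sum_a (a == i)%:R * G a = G i.
Proof.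
rewrite (bigD1 i) //= eqxx mul1r big1 ?addr0 // => a /negbTE ->.
by rewrite mul0r.
Qed.

Lemma mderivXU_eval (E : fieldType) n (i a : 'I_n) (x : 'I_n -> E) :
  (mderiv i 'X_a).@[x] = (a == i)%:R.
Proof.
rewrite mderivX mnm1E; case: eqP => [->|_]; last by rewrite scale0r meval0.
have -> : (U_(i) - U_(i))%MM = 0%MM by apply/mnmP => j; rewrite mnmBE subnn mnm0E.
by rewrite mpolyX0 scale1r meval1.
Qed.

Lemma Qform_eval (E : fieldType) (c : 'I_3 -> 'I_3 -> E) (x : 'I_3 -> E) :
  (Qform c).@[x] = \sum_a \sum_b c a b * x a * x b.
Proof.
rewrite /Qform (big_morph _ (@mevalD _ _ x) (meval0 x)); apply: eq_bigr => a _.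
rewrite (big_morph _ (@mevalD _ _ x) (meval0 x)); apply: eq_bigr => b _.
by rewrite mevalZ mevalM !mevalXU mulrA.
Qed.

Lemma linform_eval (E : fieldType) (l : 'I_3 -> E) (x : 'I_3 -> E) :
  (linform l).@[x] = \sum_a l a * x a.
Proof.
rewrite /linform (big_morph _ (@mevalD _ _ x) (meval0 x)); apply: eq_bigr => a _.
by rewrite mevalZ mevalXU.
Qed.

Lemma Qform_deriv (E : fieldType) (c : 'I_3 -> 'I_3 -> E) (x : 'I_3 -> E) i :
  (mderiv i (Qform c)).@[x] = \sum_b c i b * x b + \sum_a c a i * x a.
Proof.
rewrite /Qform (big_morph _ (@mderivD _ _ i) (@mderiv0 _ _ i)) (big_morph _ (@mevalD _ _ x) (meval0 x)).
transitivity (\sum_a \sum_b (c a b * ((a == i)%:R * x b) + c a b * (x a * (b == i)%:R))).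
  apply: eq_bigr => a _.
  rewrite (big_morph _ (@mderivD _ _ i) (@mderiv0 _ _ i)) (big_morph _ (@mevalD _ _ x) (meval0 x)).
  apply: eq_bigr => b _.
  by rewrite mderivZ mderivM mevalZ mevalD !mevalM !mevalXU !mderivXU_eval mulrDr.
rewrite SS_add; congr (_ + _).
  rewrite -(sum_ind i (fun a => \sum_b c a b * x b)).
  by apply: eq_bigr => a _; rewrite mulr_sumr; apply: eq_bigr => b _; rewrite mulrCA.
rewrite exchange_big /= -(sum_ind i (fun b => \sum_a c a b * x a)).
by apply: eq_bigr => b _; rewrite mulr_sumr; apply: eq_bigr => a _; rewrite mulrA mulrC.
Qed.


Lemma qf_rest (R : comNzRingType) (c : 'I_3 -> 'I_3 -> R) (x : 'I_3 -> R) (i : 'I_3) :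
  x i = 0 ->
  \sum_a \sum_b c a b * x a * x b =
  c (rest1 i) (rest1 i) * x (rest1 i) ^+ 2 +
  (c (rest1 i) (rest2 i) + c (rest2 i) (rest1 i)) * x (rest1 i) * x (rest2 i) +
  c (rest2 i) (rest2 i) * x (rest2 i) ^+ 2.
Proof.
move=> h; rewrite (sum3 i) !(sum3 i) h.
move: (x (rest1 i)) (x (rest2 i)) => X Y.
ring.
Qed.

Lemma row_rest (R : comNzRingType) (l : 'I_3 -> R) (x : 'I_3 -> R) (i : 'I_3) :
  x i = 0 -> \sum_b l b * x b = l (rest1 i) * x (rest1 i) + l (rest2 i) * x (rest2 i).
Proof. by move=> h; rewrite (sum3 i) h mulr0 add0r. Qed.

Lemma first_nz_ne0 (E : fieldType) (v : 'I_3 -> E) :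
  (exists i, v i != 0) -> v (first_nz v) != 0.
Proof.
move=> [i hi]; rewrite /first_nz; case: ifP => // /negbFE /eqP h0.
case: ifP => // /negbFE /eqP h1.
have e0 : (inord 0 : 'I_3) = ord0 by apply: val_inj; rewrite /= inordK.
case: (ord3_cases i) hi => -> //.
  by rewrite e0 h0 eqxx.
by rewrite h1 eqxx.
Qed.

Lemma evalE_in (K : fieldType) (E : fieldExtType K) (p : {mpoly K[2]}) (th : E) :
  (map_mpoly (in_alg E) p).@[pt2 th 1] \in <<1; th>>%VS.
Proof.
rewrite mevalE rpred_sum // => m _.
rewrite rpredM // ?mcoeff_map_mpoly ?rpredZ ?mem1v //.
rewrite rpred_prod // => i _; rewrite rpredX // /pt2.
by case: ifP => _; rewrite ?memv_adjoin ?mem1v.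
Qed.

Lemma row_ip_zero (R : comNzRingType) (c : 'I_3 -> 'I_3 -> R) (v u : 'I_3 -> R) (i : 'I_3) :
  (forall a b, c a b = c b a) -> (forall a, \sum_b c a b * v b = 0) ->
  GRing.lreg (v i) ->
  \sum_b c (rest1 i) b * u b = 0 -> \sum_b c (rest2 i) b * u b = 0 ->
  forall a, \sum_b c a b * u b = 0.
Proof.
move=> hs hv hvi hj hk.
have hi : \sum_b c i b * u b = 0.
  have : \sum_a v a * (\sum_b c a b * u b) = 0.
    transitivity (\sum_a \sum_b v a * (c a b * u b)).
      by apply: eq_bigr => a _; rewrite mulr_sumr.
    rewrite exchange_big /=.
    transitivity (\sum_b u b * (\sum_a c b a * v a)).
      apply: eq_bigr => b _.
      rewrite mulr_sumr; apply: eq_bigr => a _.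
      by rewrite hs; move: (v a) (u b) (c b a) => X Y Z; ring.
    by rewrite big1 // => b _; rewrite hv mulr0.
  rewrite (sum3 i) hj hk !mulr0 !addr0 => h.
  by apply: hvi; rewrite h mulr0.
by move=> a; case: (ord3_other i a) => ->.
Qed.


Definition lf (E : fieldType) (i : 'I_3) (ci cj ck : E) : 'I_3 -> E :=
  fun a => if a == i then ci else if a == rest1 i then cj else ck.

Lemma linform_lf (E : fieldType) (i : 'I_3) (ci cj ck : E) :
  linform (lf i ci cj ck) = ci%:MP * 'X_i + cj%:MP * 'X_(rest1 i) + ck%:MP * 'X_(rest2 i).
Proof.
have [n1 n2 n12] := rest_neq i.
rewrite /linform (sum3 i) /lf eqxx (negbTE n1) (negbTE n2) eqxx eq_sym (negbTE n12).
by rewrite -!mul_mpolyC.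
Qed.

Definition l1f (E : fieldType) (i : 'I_3) (al b ga wj wk y : E) : 'I_3 -> E :=
  if al == 0 then lf i (- wk) 0 1
  else lf i (- (2%:R * al * wj + (2%:R * b + y) * wk)) (2%:R * al) (2%:R * b + y).

Definition l2f (E : fieldType) (i : 'I_3) (al b ga wj wk y : E) : 'I_3 -> E :=
  if al == 0 then lf i (- (2%:R * b * wj + ga * wk)) (2%:R * b) ga
  else lf i ((4%:R * al)^-1 * - (2%:R * al * wj + (2%:R * b - y) * wk))
            ((4%:R * al)^-1 * (2%:R * al)) ((4%:R * al)^-1 * (2%:R * b - y)).

Lemma factor_Q (E : fieldType) (cc : 'I_3 -> 'I_3 -> E) (i : 'I_3) (wj wk y : E) :
  (forall a b, cc a b = cc b a) ->
  cc i (rest1 i) = - (cc (rest1 i) (rest1 i) * wj + cc (rest1 i) (rest2 i) * wk) ->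
  cc i (rest2 i) = - (cc (rest1 i) (rest2 i) * wj + cc (rest2 i) (rest2 i) * wk) ->
  cc i i = - (cc i (rest1 i) * wj + cc i (rest2 i) * wk) ->
  (4%:R : E) != 0 ->
  y ^+ 2 = 4%:R * cc (rest1 i) (rest2 i) ^+ 2 - 4%:R * cc (rest1 i) (rest1 i) * cc (rest2 i) (rest2 i) ->
  Qform cc = linform (l1f i (cc (rest1 i) (rest1 i)) (cc (rest1 i) (rest2 i)) (cc (rest2 i) (rest2 i)) wj wk y)
           * linform (l2f i (cc (rest1 i) (rest1 i)) (cc (rest1 i) (rest2 i)) (cc (rest2 i) (rest2 i)) wj wk y).
Proof.
move=> hs hij hik hii h4 hy.
rewrite /Qform (sum3 i) !(sum3 i) -!mul_mpolyC.
rewrite (hs (rest1 i) i) (hs (rest2 i) i) (hs (rest2 i) (rest1 i)) hii hij hik.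
rewrite /l1f /l2f.
move: hy; move: (cc (rest1 i) (rest1 i)) (cc (rest1 i) (rest2 i)) (cc (rest2 i) (rest2 i)) => al b ga hy.
case: eqP => [a0|na0].
  by rewrite !linform_lf a0; ring.
rewrite !linform_lf.
have e1 : 1 - 4%:R * al * (4%:R * al)^-1 = 0.
  by rewrite mulfV ?subrr // mulf_neq0 //; apply/eqP.
move: e1; move: ((4%:R * al)^-1) => q0 e1.
have e2 : q0 * (y ^+ 2 - (4%:R * b ^+ 2 - 4%:R * al * ga)) = 0 by rewrite hy subrr mulr0.
move: ('X_i : {mpoly E[3]}) ('X_(rest1 i) : {mpoly E[3]}) ('X_(rest2 i) : {mpoly E[3]}) => Xi Xj Xk.
pose X := Xj - wj%:MP * Xi; pose Y := Xk - wk%:MP * Xi.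
pose S := al%:MP * (X * X) + (2%:R * b)%:MP * (X * Y) + ga%:MP * (Y * Y).
match goal with |- _ = ?R =>
  transitivity (R + (1 - 4%:R * al * q0)%:MP * S + (q0 * (y ^+ 2 - (4%:R * b ^+ 2 - 4%:R * al * ga)))%:MP * (Y * Y))
end; last by rewrite e1 e2 !mpolyC0 !mul0r !addr0.
rewrite /S /X /Y; ring.
Qed.

Lemma lf_in (K : fieldType) (E : fieldExtType K) (F : {vspace E}) (i a : 'I_3) (ci cj ck : E) :
  ci \in F -> cj \in F -> ck \in F -> lf i ci cj ck a \in F.
Proof. by move=> h1 h2 h3; rewrite /lf; case: ifP => _ //; case: ifP. Qed.


Unset Implicit Arguments.

Lemma SS_rmorph (R S : nzRingType) (g : {rmorphism R -> S}) (G : 'I_3 -> 'I_3 -> R) :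
  g (\sum_a \sum_b G a b) = \sum_a \sum_b g (G a b).
Proof. by rewrite rmorph_sum; apply: eq_bigr => a _; rewrite rmorph_sum. Qed.

Lemma nat_neq0 (K : fieldExtType rat) (E : fieldExtType K) n :
  (n.+1%:R : E) != 0.
Proof.
by rewrite -(rmorph_nat (in_alg E)) fmorph_eq0 -(rmorph_nat (in_alg K)) fmorph_eq0 Num.Theory.pnatr_eq0.
Qed.

Section EvalE.
Variables (K : fieldType) (E : fieldExtType K) (s t : E).
Lemma evalED (p q : {mpoly K[2]}) : evalE (p + q) s t = evalE p s t + evalE q s t.
Proof. by rewrite /evalE !rmorphD. Qed.
Lemma evalEB (p q : {mpoly K[2]}) : evalE (p - q) s t = evalE p s t - evalE q s t.
Proof. by rewrite /evalE !rmorphB. Qed.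
Lemma evalEM (p q : {mpoly K[2]}) : evalE (p * q) s t = evalE p s t * evalE q s t.
Proof. by rewrite /evalE !rmorphM. Qed.
Lemma evalEX (p : {mpoly K[2]}) n : evalE (p ^+ n) s t = evalE p s t ^+ n.
Proof. by rewrite /evalE !rmorphXn. Qed.
Lemma evalEn n : evalE (n%:R : {mpoly K[2]}) s t = n%:R.
Proof. by rewrite /evalE !rmorph_nat. Qed.
End EvalE.

Theorem lemma4p6
  (K : fieldExtType rat) (a1 a2 e : nat)
  (f : 'I_3 -> 'I_3 -> {mpoly K[2]})
  (f_sym : forall i j, f i j = f j i)
  (f_hom : forall i j, f i j \is (adeg a1 a2 i + adeg a1 a2 j + e)%N.-homog)
  (f_int : forall i j m, is_integral (f i j)@_m)
  (X_smooth : smooth_surface f)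
  (t_ndiv : ~ exists q : {mpoly K[2]}, Delta f = 'X_(inord 1) * q)
  (Dp : {poly K}) (Dp_irr : irreducible_poly Dp) (Dp_dvd : Dp %| dehom (Delta f))
  (E : fieldExtType K) (theta : E) (theta_root : root (map_poly (in_alg E) Dp) theta)
  (v : 'I_3 -> E)
  (v_sing : conic_sing_pt (fun i j => evalE (f i j) theta 1) v) :
  let ip := first_nz v in
  let d := evalE (delta f ip) theta 1 in
  d != 0 /\
  (split_over <<1; theta>>%VS (fun i j => evalE (f i j) theta 1) <->
   exists y : E, y \in <<1; theta>>%VS /\ y ^+ 2 = d).
Proof.
move=> ip d.
have [vnz [_ vder]] := v_sing.
set c := (fun i j => evalE (f i j) theta 1) in v_sing vder *.
have ceq a b : c a b = evalE (f a b) theta 1 by [].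
clearbody c.
have csym a b : c a b = c b a by rewrite !ceq f_sym.
have two0 : (2%:R : E) != 0 := @nat_neq0 K E 1.
have four0 : (4%:R : E) != 0 := @nat_neq0 K E 3.
have vker a : \sum_b c a b * v b = 0.
  have h2 : (\sum_b c a b * v b) + (\sum_b c a b * v b) = 0.
    transitivity (mderiv a (Qform c)).@[v]; last exact: vder.
    rewrite (@Qform_deriv E c v a); congr (_ + _).
    by apply: eq_bigr => b _; rewrite csym.
  move: (\sum_b c a b * v b) h2 => S h2.
  have : 2%:R * S = 0 by rewrite mulr_natl mulr2n.
  by move/eqP; rewrite mulf_eq0 (negbTE two0) /= => /eqP.
have vip : v ip != 0 := first_nz_ne0 vnz.
have vreg : GRing.lreg (v ip) := mulfI vip.
have [nj nk njk] := rest_neq ip.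
have rank2 : forall u : 'I_3 -> E, u ip = 0 -> (exists a, u a != 0) ->
    (forall a, \sum_b c a b * u b = 0) -> False.
  move=> u hu [a0 ha0] huk.
  pose cs a b := (mderiv (inord 0) (map_mpoly (in_alg E) (f a b))).@[pt2 theta 1].
  have [L [iota [hc [al [be [hne heq]]]]]] := quad_root
    (\sum_a \sum_b cs a b * u a * u b)
    (\sum_a \sum_b cs a b * (u a * v b + v a * u b))
    (\sum_a \sum_b cs a b * v a * v b).
  pose x := fun a => al * iota (u a) + be * iota (v a).
  apply: (sing_contra f_sym f_hom X_smooth (th := iota theta) (x := x)).
  - case: (eqVneq be 0) => [be0|nbe].
      have nal : al != 0 by case: hne => //; rewrite be0 eqxx.
      by exists a0; rewrite /x be0 mul0r addr0 mulf_neq0 // fmorph_eq0.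
    by exists ip; rewrite /x hu rmorph0 mulr0 add0r mulf_neq0 // fmorph_eq0.
  - move=> a.
    transitivity (al * iota (\sum_b c a b * u b) + be * iota (\sum_b c a b * v b));
      last by rewrite huk vker rmorph0 !mulr0 addr0.
    rewrite !rmorph_sum !mulr_sumr -big_split /=; apply: eq_bigr => b _.
    rewrite (transfer_eval hc) /x !rmorphM /= ceq /evalE.
    move: (iota ((map_mpoly (in_alg E) (f a b)).@[pt2 theta 1])) (iota (u b)) (iota (v b)) => C0 U0 V0.
    ring.
  - transitivity (iota (\sum_a \sum_b cs a b * u a * u b) * al ^+ 2 +
      iota (\sum_a \sum_b cs a b * (u a * v b + v a * u b)) * (al * be) +
      iota (\sum_a \sum_b cs a b * v a * v b) * be ^+ 2); last exact: heq.
    rewrite !SS_rmorph.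
    transitivity (\sum_a \sum_b (al ^+ 2 * iota (cs a b * u a * u b) +
      (al * be * iota (cs a b * (u a * v b + v a * u b)) +
       be ^+ 2 * iota (cs a b * v a * v b)))).
      apply: eq_bigr => a _; apply: eq_bigr => b _.
      rewrite (transfer_deriv hc) /x !rmorphM !rmorphD !rmorphM /=.
      move: (iota (cs a b)) (iota (u a)) (iota (v a)) (iota (u b)) (iota (v b)) => C0 U0 V0 U1 V1.
      ring.
    rewrite !SS_add !SS_mul.
    move: (\sum_a \sum_b iota (cs a b * u a * u b)) => S1.
    move: (\sum_a \sum_b iota (cs a b * (u a * v b + v a * u b))) => S2.
    move: (\sum_a \sum_b iota (cs a b * v a * v b)) => S3.
    ring.
set j := rest1 ip in nj njk *.
set k := rest2 ip in nk njk *.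
have hd : d = (c j k + c k j) ^+ 2 - 4%:R * c j j * c k k.
  by rewrite /d /delta evalEB evalEX !evalEM evalED evalEn -!ceq.
have hd' : d = 4%:R * (c j k ^+ 2 - c j j * c k k).
  by rewrite hd (csym k j); move: (c j k) (c j j) (c k k) => X Y Z; ring.
have ipj : (ip == j) = false by apply/negbTE; rewrite eq_sym.
have ipk : (ip == k) = false by apply/negbTE; rewrite eq_sym.
have kj : (k == j) = false by apply/negbTE; rewrite eq_sym.
have d0 : d != 0.
  apply/eqP => hd0; move: hd0; rewrite hd' => /eqP; rewrite mulf_eq0 (negbTE four0) /=.
  rewrite subr_eq0 => /eqP hb.
  have uip (x1 x2 : E) : (if ip == j then x1 else if ip == k then x2 else 0) = 0.
    by rewrite ipj ipk.
  have uj (x1 x2 : E) : (if j == j then x1 else if j == k then x2 else 0) = x1 by rewrite eqxx.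
  have uk (x1 x2 : E) : (if k == j then x1 else if k == k then x2 else 0) = x2.
    by rewrite kj eqxx.
  case: (eqVneq (c j j) 0) => [a0|na0].
    have b0 : c j k = 0 by apply/eqP; rewrite -sqrf_eq0 hb a0 mul0r.
    apply: (rank2 (fun a => if a == j then 1 else if a == k then 0 else 0)).
    + exact: uip.
    + by exists j; rewrite uj oner_neq0.
    + apply: (row_ip_zero csym vker vreg).
        by rewrite (row_rest _ (uip _ _)) -/j -/k uj uk a0 b0 !mul0r addr0.
      by rewrite (row_rest _ (uip _ _)) -/j -/k uj uk (csym k j) b0 mul0r mulr0 addr0.
  apply: (rank2 (fun a => if a == j then - c j k else if a == k then c j j else 0)).
  + exact: uip.
  + by exists k; rewrite uk.
  + apply: (row_ip_zero csym vker vreg).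
      rewrite (row_rest _ (uip _ _)) -/j -/k uj uk.
      by move: (c j k) (c j j) => X Y; ring.
    rewrite (row_rest _ (uip _ _)) -/j -/k uj uk (csym k j).
    move: hb; move: (c j k) (c j j) (c k k) => X Y Z hb.
    have -> : X * - X + Z * Y = - (X ^+ 2 - Y * Z) by ring.
    by rewrite hb subrr oppr0.
split => //.
have cF a b : c a b \in <<1; theta>>%VS by rewrite ceq; exact: evalE_in.
split.
  case=> [hsm | [l1 [l2 [hl1 [hl2 hQ]]]]].
    by case: (hsm v); have [_ [hv0 _]] := v_sing; split.
  have ev (s t : E) : c j j * s ^+ 2 + (c j k + c k j) * s * t + c k k * t ^+ 2 =
      (l1 j * s + l1 k * t) * (l2 j * s + l2 k * t).
    pose x : 'I_3 -> E := fun a => if a == j then s else if a == k then t else 0.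
    have xi : x ip = 0 by rewrite /x ipj ipk.
    have xj : x j = s by rewrite /x eqxx.
    have xk : x k = t by rewrite /x kj eqxx.
    have := congr1 (meval x) hQ.
    rewrite mevalM Qform_eval !linform_eval (qf_rest _ xi) !(row_rest _ xi) -/j -/k xj xk.
    by [].
  exists (l1 j * l2 k - l1 k * l2 j); split; first by rewrite rpredB ?rpredM.
  have e10 := ev 1 0; have e01 := ev 0 1; have e11 := ev 1 1.
  rewrite hd.
  move: e10 e01 e11; move: (c j j) (c j k) (c k j) (c k k) (l1 j) (l1 k) (l2 j) (l2 k).
  move=> A B B' C P Q R S e10 e01 e11.
  have hA : A = P * R.
    transitivity (A * 1 ^+ 2 + (B + B') * 1 * 0 + C * 0 ^+ 2); first ring.
    by rewrite e10; ring.
  have hC : C = Q * S.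
    transitivity (A * 0 ^+ 2 + (B + B') * 0 * 1 + C * 1 ^+ 2); first ring.
    by rewrite e01; ring.
  have hS : B + B' = (P + Q) * (R + S) - A - C.
    transitivity ((A * 1 ^+ 2 + (B + B') * 1 * 1 + C * 1 ^+ 2) - A - C); first ring.
    by rewrite e11; ring.
  by rewrite hS hA hC; ring.
move=> [y [hyF hy2]]; right.
have hy : y ^+ 2 = 4%:R * c j k ^+ 2 - 4%:R * c j j * c k k.
  by rewrite hy2 hd (csym k j); ring.
pose det2 := c j j * c k k - c j k ^+ 2.
have hdet : det2 != 0.
  apply/eqP => h0; move/eqP: d0; apply.
  have -> : d = - (4%:R * det2) by rewrite hd' /det2; ring.
  by rewrite h0 mulr0 oppr0.
pose wj := (c j k * c ip k - c k k * c ip j) / det2.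
pose wk := (c j k * c ip j - c j j * c ip k) / det2.
have Rj : c ip j * v ip + c j j * v j + c j k * v k = 0.
  transitivity (\sum_b c j b * v b); last exact: vker.
  by rewrite (sum3 ip) -/j -/k (csym j ip).
have Rk : c ip k * v ip + c j k * v j + c k k * v k = 0.
  transitivity (\sum_b c k b * v b); last exact: vker.
  by rewrite (sum3 ip) -/j -/k (csym k ip) (csym k j).
have Ri : c ip ip * v ip + c ip j * v j + c ip k * v k = 0.
  transitivity (\sum_b c ip b * v b); last exact: vker.
  by rewrite (sum3 ip) -/j -/k.
have vj : v j = wj * v ip.
  have h : v j * det2 - (c j k * c ip k - c k k * c ip j) * v ip =
    c k k * (c ip j * v ip + c j j * v j + c j k * v k) -
    c j k * (c ip k * v ip + c j k * v j + c k k * v k) by rewrite /det2; ring.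
  rewrite Rj Rk !mulr0 subr0 in h; move/eqP: h; rewrite subr_eq0 => /eqP h.
  by rewrite /wj; apply: (mulIf hdet); rewrite h mulrAC divfK.
have vk : v k = wk * v ip.
  have h : v k * det2 - (c j k * c ip j - c j j * c ip k) * v ip =
    c j j * (c ip k * v ip + c j k * v j + c k k * v k) -
    c j k * (c ip j * v ip + c j j * v j + c j k * v k) by rewrite /det2; ring.
  rewrite Rj Rk !mulr0 subr0 in h; move/eqP: h; rewrite subr_eq0 => /eqP h.
  by rewrite /wk; apply: (mulIf hdet); rewrite h mulrAC divfK.
have solve (X Y : E) : v ip * (X + Y) = 0 -> X = - Y.
  move/eqP; rewrite mulf_eq0 (negbTE vip) /= addr_eq0 => /eqP.
  done.
have hij : c ip j = - (c j j * wj + c j k * wk).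
  apply: solve; transitivity (c ip j * v ip + c j j * v j + c j k * v k); last exact: Rj.
  by rewrite vj vk; ring.
have hik : c ip k = - (c j k * wj + c k k * wk).
  apply: solve; transitivity (c ip k * v ip + c j k * v j + c k k * v k); last exact: Rk.
  by rewrite vj vk; ring.
have hii : c ip ip = - (c ip j * wj + c ip k * wk).
  apply: solve; transitivity (c ip ip * v ip + c ip j * v j + c ip k * v k); last exact: Ri.
  by rewrite vj vk; ring.
have det2F : det2 \in <<1; theta>>%VS by rewrite /det2 rpredB ?rpredM ?rpredX ?cF.
have wjF : wj \in <<1; theta>>%VS by rewrite /wj rpredM ?rpredV ?rpredB ?rpredM ?cF.
have wkF : wk \in <<1; theta>>%VS by rewrite /wk rpredM ?rpredV ?rpredB ?rpredM ?cF.
exists (l1f ip (c j j) (c j k) (c k k) wj wk y), (l2f ip (c j j) (c j k) (c k k) wj wk y).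
split; [|split].
- move=> a; rewrite /l1f; case: eqP => _; apply: lf_in;
    by rewrite ?(rpredN, rpredD, rpredB, rpredM, rpredV, rpred_nat, rpred0, rpred1, cF, wjF, wkF, hyF).
- move=> a; rewrite /l2f; case: eqP => _; apply: lf_in;
    by rewrite ?(rpredN, rpredD, rpredB, rpredM, rpredV, rpred_nat, rpred0, rpred1, cF, wjF, wkF, hyF).
- exact: (factor_Q csym hij hik hii four0 hy).
Qed.
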